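(* Let $n=2^m$ for a positive integer $m$. Let $C_0\subseteq F^n$ be a binary code of length $n$, size $2^{n-1}/n$ and minimum distance $4$ all of whose words have even weight, and let $C_1\subseteq F^n$ be a binary code of length $n$, size $2^{n-1}/n$ and minimum distance $4$ all of whose words have odd weight. Then there exists a set $C\subseteq X^n$ with $|C| = 2^{n-1}/n$, in which any two distinct words are at Hamming distance at least $3$, such that $e(C)=C_0$ and $o(C)=C_1$.
   Context: $F^n$ is the set of binary words of length $n$; $X^n$ is the set of words of length $n$ over $\{*,0,1\}$ with exactly one $*$ (equivalently, ternary words of length $n$ and weight $n-1$). The Hamming distance between words of $X^n\cup F^n$ is the number of coordinates in which they differ. A word $\mathbf{x}\in X^n$ is identified with the pair of binary words obtained by replacing $*$ by $0$ and by $1$ (e.g. $01{*}0=\{0100,0110\}$); one of them has even weight, denoted $e(\mathbf{x})$, and the other odd weight, denoted $o(\mathbf{x})$. For $C\subseteq X^n$, $e(C)=\{e(\mathbf{c}):\mathbf{c}\in C\}$ and $o(C)=\{o(\mathbf{c}):\mathbf{c}\in C\}$. *)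

(* Defs.v *)
From mathcomp Require Import all_boot.
Set Implicit Arguments. Unset Strict Implicit. Unset Printing Implicit Defensive.

Definition bword (n : nat) := {ffun 'I_n -> bool}.
(* words over {*,0,1}: None stands for the symbol * *)
Definition tword (n : nat) := {ffun 'I_n -> option bool}.

Definition hdist (n : nat) (A : eqType) (x y : {ffun 'I_n -> A}) : nat :=
  #|[set i : 'I_n | x i != y i]|.

Definition bweight (n : nat) (x : bword n) : nat := #|[set i : 'I_n | x i]|.

Definition in_Xn (n : nat) (x : tword n) : bool := #|[set i : 'I_n | x i == None]| == 1.

Definition fill (n : nat) (x : tword n) (b : bool) : bword n :=
  [ffun i => odflt b (x i)].

(* e(x): the filling of even weight; o(x): the filling of odd weight *)
Definition e_of (n : nat) (x : tword n) : bword n :=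
  if odd (bweight (fill x false)) then fill x true else fill x false.
Definition o_of (n : nat) (x : tword n) : bword n :=
  if odd (bweight (fill x false)) then fill x false else fill x true.

Definition e_set (n : nat) (C : {set tword n}) : {set bword n} := [set e_of c | c in C].
Definition o_set (n : nat) (C : {set tword n}) : {set bword n} := [set o_of c | c in C].

(* Main.v *)
Require Import Defs.
From mathcomp Require Import all_boot.
From mathcomp Require Import zify.

Set Implicit Arguments. Unset Strict Implicit.
Section Helpers.
Context {n : nat}.
Implicit Types x y c : bword n.

Definition flip (x : bword n) (i : 'I_n) : bword n :=
  [ffun k => if k == i then ~~ x k else x k].

Definition mk (c : bword n) (i : 'I_n) : tword n :=
  [ffun k => if k == i then None else Some (c k)].

Lemma flipK x i : flip (flip x i) i = x.
Proof. apply/ffunP=> k; rewrite !ffunE; case: (k == i) => //; exact: negbK. Qed.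

Lemma hdist_xx x : hdist x x = 0.
Proof.
rewrite /hdist (_ : [set k | _] = set0) ?cards0 //; apply/setP=> k; by rewrite !inE eqxx.
Qed.

Lemma hdist_flip x i : hdist x (flip x i) = 1.
Proof.
rewrite /hdist (_ : [set k | _] = [set i]) ?cards1 //; apply/setP=> k.
rewrite !inE ffunE; case: (k =P i) => [->|_] /=; first by case: (x i).
by rewrite eqxx.
Qed.

Lemma flip_inj x : injective (flip x).
Proof.
move=> i j /ffunP/(_ i); rewrite !ffunE eqxx; case: (i =P j) => // _.
by case: (x i).
Qed.

Lemma odd_flip x i : odd (bweight (flip x i)) = ~~ odd (bweight x).
Proof.
rewrite /bweight; case Hi: (x i).
  have -> : [set k | flip x i k] = [set k | x k] :\ i.
    apply/setP=> k; rewrite !inE ffunE; case: (k =P i) => [->|/eqP ne].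
      by rewrite Hi ?eqxx.
    by rewrite ?ne.
  by rewrite (cardsD1 i [set k | x k]) inE Hi add1n /= negbK.
have -> : [set k | flip x i k] = i |: [set k | x k].
  apply/setP=> k; rewrite !inE ffunE; case: (k =P i) => [->|/eqP ne].
    by rewrite Hi ?eqxx.
  by rewrite ?(negbTE ne).
by rewrite cardsU1 inE Hi add1n.
Qed.

Lemma hdist_le2 y i j : hdist (flip y i) (flip y j) <= 2.
Proof.
rewrite /hdist; apply: leq_trans (_ : #|[set i; j]| <= 2); last first.
  by rewrite cards2; case: (i != j).
apply: subset_leq_card; apply/subsetP=> k; rewrite !inE !ffunE.
case: (k =P i) => [->|_]; first by rewrite ?eqxx.
case: (k =P j) => [->|_]; first by rewrite ?eqxx orbT.
by rewrite ?eqxx.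
Qed.

Lemma hdist1_flip x y : hdist x y = 1 -> exists i, y = flip x i.
Proof.
rewrite /hdist => /eqP/cards1P [i Hi]; exists i; apply/ffunP=> k.
rewrite ffunE; move/setP: Hi => /(_ k); rewrite !inE.
case: (k =P i) => [->|_] H; first by move: H; case: (x i); case: (y i).
by move/negbFE/eqP: H => ->.
Qed.

Lemma in_Xn_mk c i : in_Xn (mk c i).
Proof.
rewrite /in_Xn (_ : [set k | _] = [set i]) ?cards1 //; apply/setP=> k.
by rewrite !inE ffunE; case: (k == i).
Qed.

Lemma fill_mk c i b : fill (mk c i) b = if b == c i then c else flip c i.
Proof.
case: (b =P c i) => [->|ne]; apply/ffunP=> k; rewrite !ffunE;
  case: (k =P i) => [->|_] //=.
by move: ne; case: b; case: (c i).
Qed.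

Lemma eo_mk c i : ~~ odd (bweight c) -> e_of (mk c i) = c /\ o_of (mk c i) = flip c i.
Proof.
move=> ev; rewrite /e_of /o_of !fill_mk; case Hc: (c i) => /=;
  by rewrite ?odd_flip (negbTE ev).
Qed.

Lemma dist_mk c c' i j : 3 < hdist c c' -> 3 <= hdist (mk c i) (mk c' j).
Proof.
rewrite /hdist => h.
apply: leq_trans (_ : 3 <= #|[set k | c k != c' k] :\ i|) _.
  move: h; rewrite (cardsD1 i [set k | c k != c' k]).
  have := leq_b1 (i \in [set k | c k != c' k]); lia.
apply: subset_leq_card; apply/subsetP=> k; rewrite !inE !ffunE => /andP[ki ne'].
rewrite (negbTE ki); case: (k == j) => //.
Qed.

End Helpers.

Theorem lemma1 (m n : nat) (hm : 0 < m) (hn : n = 2 ^ m)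
  (C0 C1 : {set bword n}) :
  #|C0| = 2 ^ (n - 1) %/ n ->
  (forall x y, x \in C0 -> y \in C0 -> x != y -> 4 <= hdist x y) ->
  (forall x, x \in C0 -> ~~ odd (bweight x)) ->
  #|C1| = 2 ^ (n - 1) %/ n ->
  (forall x y, x \in C1 -> y \in C1 -> x != y -> 4 <= hdist x y) ->
  (forall x, x \in C1 -> odd (bweight x)) ->
  exists C : {set tword n},
    [/\ (forall c, c \in C -> in_Xn c),
        #|C| = 2 ^ (n - 1) %/ n,
        (forall x y, x \in C -> y \in C -> x != y -> 3 <= hdist x y),
        e_set C = C0 & o_set C = C1].
Proof.
move=> hC0 d0 p0 hC1 d1 p1.
have n0 : 0 < n by rewrite hn expn_gt0.
have hdiv : 2 ^ (n - 1) %/ n * n = 2 ^ (n - 1).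
  rewrite divnK // {1}hn dvdn_exp2l //.
  have := ltn_expl m (ltnSn 1); rewrite -hn; lia.
have hall : #|[set: bword n]| = 2 ^ n.
  by rewrite cardsT card_ffun card_bool card_ord.
have disj : C0 :&: C1 = set0.
  apply/setP=> x; rewrite !inE; case h0: (x \in C0); case h1: (x \in C1) => //.
  by move: (p0 _ h0); rewrite (p1 _ h1).
pose D := setX (C0 :|: C1) [set: 'I_n].
pose Phi := fun p : bword n * 'I_n => flip p.1 p.2.
have injPhi : {in D &, injective Phi}.
  move=> [c i] [c' j]; rewrite !inE /= !andbT /Phi /= => hc hc' E.
  case: (eqVneq c c') => [Ecc|ne].
    by subst c'; move/flip_inj: E => ->.
  exfalso.
  have Ec' : c' = flip (flip c i) j by rewrite E flipK.
  have par : odd (bweight c) = odd (bweight c') by rewrite Ec' !odd_flip negbK.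
  have h2 : hdist c c' <= 2.
    by have := hdist_le2 (flip c i) i j; rewrite flipK E flipK.
  move: hc hc' => /orP[h|h] /orP[h'|h'].
  - by have := d0 _ _ h h' ne; lia.
  - by move: par; rewrite (negbTE (p0 _ h)) (p1 _ h').
  - by move: par; rewrite (negbTE (p0 _ h')) (p1 _ h).
  - by have := d1 _ _ h h' ne; lia.
have cardD : #|Phi @: D| = 2 ^ n.
  rewrite card_in_imset // cardsX cardsT card_ord cardsU disj cards0 subn0 hC0 hC1.
  by rewrite mulnDl hdiv addnn -mul2n -expnS subn1 prednK.
have cover : Phi @: D = [set: bword n].
  by apply/eqP; rewrite eqEcard subsetT cardD hall leqnn.
have nb : forall o, o \in C1 -> exists2 c, c \in C0 & exists i, o = flip c i.
  move=> o ho; have : o \in Phi @: D by rewrite cover inE.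
  case/imsetP => [[c i]]; rewrite !inE /= andbT /Phi /= => /orP[hc|hc] Eo.
    by exists c => //; exists i.
  exfalso; have ne : c != o.
    apply/eqP=> E; move: (hdist_flip c i); by rewrite -Eo -E hdist_xx.
  by have := d1 _ _ hc ho ne; rewrite Eo hdist_flip.
pose g o := odflt o [pick c in C0 | hdist c o == 1].
have gP : forall o, o \in C1 -> g o \in C0 /\ hdist (g o) o = 1.
  move=> o ho; rewrite /g; case: pickP => [c /andP[hc /eqP h]|none] //=.
  exfalso; case: (nb o ho) => c hc [i Ei].
  by have := none c; rewrite /= hc Ei hdist_flip.
have ginj : {in C1 &, injective g}.
  move=> o o' ho ho' E.
  case: (gP o ho) (gP o' ho') => hc h [hc' h'].
  case: (hdist1_flip h) => i Ei; case: (hdist1_flip h') => j Ej.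
  case: (eqVneq o o') => // ne.
  have h4 := d1 _ _ ho ho' ne.
  have h2 : hdist o o' <= 2 by rewrite Ei Ej -E; exact: hdist_le2.
  lia.
have gC : g @: C1 = C0.
  apply/eqP; rewrite eqEcard; apply/andP; split.
    by apply/subsetP => c /imsetP[o ho ->]; exact: (gP o ho).1.
  by rewrite card_in_imset // hC0 hC1.
have uniqi : forall c i j, flip c i \in C1 -> flip c j \in C1 -> i = j.
  move=> c i j hi hj; case: (eqVneq (flip c i) (flip c j)) => [/flip_inj //|ne].
  have h2 : hdist (flip c i) (flip c j) <= 2 by exact: hdist_le2.
  have := d1 _ _ hi hj ne; rewrite ltnNge (leq_trans h2) //.
pose C := [set x : tword n | [exists c in C0, exists i, (flip c i \in C1) && (x == mk c i)]].
have eC : e_set C = C0.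
  apply/setP=> c; apply/imsetP/idP.
    case=> x; rewrite inE => /exists_inP[c' hc' /existsP[i /andP[hi /eqP ->]]] ->.
    by rewrite (eo_mk i (p0 _ hc')).1.
  move=> hc; have := hc; rewrite -gC => /imsetP[o ho Ec].
  case: (gP o ho) => _ h; case: (hdist1_flip h) => i Ei.
  exists (mk c i); last by rewrite (eo_mk i (p0 _ hc)).1.
  rewrite inE; apply/exists_inP; exists c => //; apply/existsP; exists i.
  by rewrite Ec -Ei ho eqxx.
exists C; split.
- move=> x; rewrite inE => /exists_inP[c hc /existsP[i /andP[_ /eqP ->]]].
  exact: in_Xn_mk.
- rewrite -hC0 -eC /e_set card_in_imset //.
  move=> x y; rewrite !inE => /exists_inP[c hc /existsP[i /andP[hi /eqP ->]]].
  move=> /exists_inP[c' hc' /existsP[j /andP[hj /eqP ->]]].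
  rewrite (eo_mk i (p0 _ hc)).1 (eo_mk j (p0 _ hc')).1 => Ecc; subst c'.
  by rewrite (uniqi c i j hi hj).
- move=> x y; rewrite !inE => /exists_inP[c hc /existsP[i /andP[hi /eqP ->]]].
  move=> /exists_inP[c' hc' /existsP[j /andP[hj /eqP ->]]] ne.
  case: (eqVneq c c') => [Ecc|ne'].
    by subst c'; move: ne; rewrite (uniqi c i j hi hj) eqxx.
  exact: dist_mk (d0 _ _ hc hc' ne').
- exact: eC.
- apply/setP=> o; apply/imsetP/idP.
    case=> x; rewrite inE => /exists_inP[c hc /existsP[i /andP[hi /eqP ->]]] ->.
    by rewrite (eo_mk i (p0 _ hc)).2.
  move=> ho; case: (gP o ho) => hc h; case: (hdist1_flip h) => i Ei.
  exists (mk (g o) i); last by rewrite (eo_mk i (p0 _ hc)).2.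
  rewrite inE; apply/exists_inP; exists (g o) => //; apply/existsP; exists i.
  by rewrite -Ei ho eqxx.
Qed.
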